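(* In the iAPG setting described in the context, assume $\mu>0$ and let $\kappa=\frac{L_g}{\gamma_{\mathrm{dec}}\mu}$. For any $c\in[0,1)$ define $\psi_k=F(x^{(k)})-F^*+(1-(1-c)\alpha_k)\frac{\gamma_k}{2}\|x^*-z^{(k)}\|^2$ for $k\ge0$. Then for all $k\ge0$, $$\psi_{k+1}\le\prod_{j=0}^k(1-c\alpha_j)\Big(\psi_0+\frac{\sqrt\kappa}{2(1-c)^2\underline L}\sum_{t=0}^k\frac{\varepsilon_t^2}{\prod_{j=0}^{t-1}(1-c\alpha_j)}\Big),$$ with the convention that an empty product equals $1$. Moreover, if in addition $\varepsilon_k=0$ for all $k$, then for all $k\ge0$, $$F(x^{(k+1)})-F^*+\frac{\gamma_{k+1}}2\|x^*-z^{(k+1)}\|^2\le\Big(1-\sqrt{1/\kappa}\Big)^{k+1}\Big(F(x^{(0)})-F^*+\frac{\gamma_0}{2}\|x^*-z^{(0)}\|^2\Big).$$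
   Context: iAPG setting. Let $g,h:\mathbb R^n\to\mathbb R$ and $r:\mathbb R^n\to\mathbb R\cup\{+\infty\}$, where $g$ is convex, $\mu$-strongly convex for some $\mu\ge0$, and differentiable with $L_g$-Lipschitz gradient ($L_g>0$); $h$ is convex and differentiable with $L_h$-Lipschitz gradient; $r$ is proper, closed and convex. Put $H=h+r$, $F=g+H$, and assume $F$ attains its minimum value $F^*$ at some point $x^*$. Fix constants $\gamma_{\mathrm{dec}}\in(0,1)$ and $\underline L>0$ with $\mu\le\underline L\le L_g$. We consider points $x^{(k)},z^{(k)},y^{(k)}\in\mathbb R^n$ and scalars $\eta_k>0,\alpha_k>0,\gamma_k>0,\varepsilon_k\ge0$ ($k\ge0$) such that $x^{(0)}=z^{(0)}\in\mathrm{dom}(H)$, $\gamma_0\ge\mu$, and for every $k\ge0$: (i) $\gamma_{\mathrm{dec}}/L_g<\eta_k\le1/\underline L$; (ii) $\gamma_{k+1}=\alpha_k^2/\eta_k=(1-\alpha_k)\gamma_k+\alpha_k\mu$; (iii) $y^{(k)}=\frac{1}{\alpha_k\gamma_k+\gamma_{k+1}}\big(\alpha_k\gamma_k z^{(k)}+\gamma_{k+1}x^{(k)}\big)$; (iv) $\mathrm{dist}\big(0,\ \nabla g(y^{(k)})+\tfrac1{\eta_k}(x^{(k+1)}-y^{(k)})+\partial H(x^{(k+1)})\big)\le\varepsilon_k$; (v) $g(x^{(k+1)})\le g(y^{(k)})+\langle\nabla g(y^{(k)}),x^{(k+1)}-y^{(k)}\rangle+\frac1{2\eta_k}\|x^{(k+1)}-y^{(k)}\|^2$;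 (vi) $z^{(k+1)}=x^{(k)}+\frac1{\alpha_k}(x^{(k+1)}-x^{(k)})$. Here $\partial$ denotes the convex subdifferential and $\mathrm{dist}(0,S)=\inf_{s\in S}\|s\|$. *)

(* Defs.v *)
From mathcomp Require Import all_boot all_order all_algebra.
From mathcomp Require Import reals.
Set Implicit Arguments. Unset Strict Implicit. Unset Printing Implicit Defensive.
Import Order.TTheory GRing.Theory Num.Theory.
Local Open Scope ring_scope.

Section Defs.
Variables (R : realType) (n : nat).
Local Notation vec := 'rV[R]_n.

Definition dot (u v : vec) : R := \sum_(i < n) u ord0 i * v ord0 i.
Definition enorm (u : vec) : R := Num.sqrt (dot u u).

Definition is_gradient (f : vec -> R) (df : vec -> vec) : Prop :=
  forall x : vec, forall eps : R, 0 < eps -> exists delta : R, 0 < delta /\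
    forall h : vec, enorm h < delta ->
      `|f (x + h) - f x - dot (df x) h| <= eps * enorm h.

Definition convex_set (D : vec -> Prop) : Prop :=
  forall x y (t : R), D x -> D y -> 0 <= t <= 1 -> D (t *: x + (1 - t) *: y).

Definition convex_on (D : vec -> Prop) (f : vec -> R) : Prop :=
  convex_set D /\
  forall x y (t : R), D x -> D y -> 0 <= t <= 1 ->
    f (t *: x + (1 - t) *: y) <= t * f x + (1 - t) * f y.

Definition strongly_convex (mu : R) (f : vec -> R) : Prop :=
  forall x y (t : R), 0 <= t <= 1 ->
    f (t *: x + (1 - t) *: y) <=
      t * f x + (1 - t) * f y - mu / 2 * t * (1 - t) * (enorm (x - y)) ^+ 2.

Definition lipschitz (L : R) (G : vec -> vec) : Prop :=
  forall x y, enorm (G x - G y) <= L * enorm (x - y).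

(* An extended-valued function r : R^n -> R U {+oo} is represented by its
   effective domain D and its (real) values on D; r = +oo outside D.
   Closedness = closed epigraph {(x,a) | x in D, r x <= a}. *)
Definition closed_epigraph (D : vec -> Prop) (r : vec -> R) : Prop :=
  forall x (a : R),
    (forall eps : R, 0 < eps -> exists y (b : R),
        D y /\ r y <= b /\ enorm (y - x) < eps /\ `|b - a| < eps) ->
    D x /\ r x <= a.

Definition proper_closed_convex (D : vec -> Prop) (r : vec -> R) : Prop :=
  (exists x, D x) /\ convex_on D r /\ closed_epigraph D r.

(* convex subdifferential of the extended-valued function with domain D and
   values H on D (empty outside D) *)
Definition subdiff (D : vec -> Prop) (H : vec -> R) (x s : vec) : Prop :=
  D x /\ forall y, D y -> H x + dot s (y - x) <= H y.

(* dist(0, S) <= e, i.e. inf_{s in S} ||s|| <= e (inf of the empty set = +oo) *)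
Definition dist0_le (S : vec -> Prop) (e : R) : Prop :=
  forall d : R, 0 < d -> exists s, S s /\ enorm s < e + d.

End Defs.

(* Main.v *)
Require Import Defs.
From mathcomp Require Import all_boot all_order all_algebra.
From mathcomp Require Import reals.
From mathcomp Require Import ring lra.
Import Order.TTheory GRing.Theory Num.Theory.
Local Open Scope ring_scope.


Lemma le_eps (R : realFieldType) (A B M : R) :
  (forall e, 0 < e -> e <= 1 -> A <= B + e * M) -> A <= B.
Proof.
move=> H; case: (lerP M 0) => hM.
  by have := H 1 ltr01 (lexx _); lra.
apply/ler_addgt0Pr => e e0.
case: (lerP e M) => heM.
  have hd : 0 < e / M by rewrite divr_gt0.
  have hd1 : e / M <= 1 by rewrite ler_pdivrMr // mul1r.
  have := H _ hd hd1; rewrite mulrAC -mulrA divff ?mulr1 //; lra.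
by have := H 1 ltr01 (lexx _); lra.
Qed.

Lemma scal_key (R : realFieldType) (a et ga ga1 mu xs xk zk xp gr s v y zp : R) :
 0 < a -> a <= 1 -> 0 < et -> 0 <= ga -> 0 <= mu ->
 ga1 = a^+2/et -> ga1 = (1-a)*ga + a*mu ->
 y = (a * ga + ga1)^-1 * (a * ga * zk + ga1 * xk) ->
 zp = xk + a^-1 * (xp - xk) ->
 v = gr + et^-1 * (xp - y) + s ->
 gr*(xp-y) + 1/(2*et)*((xp-y)*(xp-y)) - a*(s*(xs-xp)) - (1-a)*(s*(xk-xp))
   - a*(gr*(xs-y)) - (1-a)*(gr*(xk-y)) - a*mu/2*((xs-y)*(xs-y))
 <= (1-a)*(ga/2)*((xs-zk)*(xs-zk)) - ga1/2*((xs-zp)*(xs-zp)) - a*(v*(xs-zp)).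
Proof.
move=> a0 a1 e0 g0 m0 hg1 hg2 hy hzp hv.
have g1p : 0 < ga1 by rewrite hg1 divr_gt0 // exprn_gt0.
have hmu : mu = (ga1 - (1-a)*ga)/a by rewrite hg2; field; lra.
have hsum : a * ga + ga1 != 0 by rewrite gt_eqF //; nra.
rewrite -subr_ge0.
have -> : (1-a)*(ga/2)*((xs-zk)*(xs-zk)) - ga1/2*((xs-zp)*(xs-zp)) - a*(v*(xs-zp)) -
  (gr*(xp-y) + 1/(2*et)*((xp-y)*(xp-y)) - a*(s*(xs-xp)) - (1-a)*(s*(xk-xp))
   - a*(gr*(xs-y)) - (1-a)*(gr*(xk-y)) - a*mu/2*((xs-y)*(xs-y)))
  = (1-a)*ga*(a*mu)/(2*ga1) * ((zk-y)*(zk-y)).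
  rewrite hv hzp hy hmu hg1.
  field.
  rewrite !gt_eqF //.
  have h1 : 0 <= a * ga * et by apply: mulr_ge0; [apply: mulr_ge0|]; lra.
  have h2 : 0 < a ^+ 2 by rewrite exprn_gt0.
  lra.
apply: mulr_ge0; last by rewrite -expr2 sqr_ge0.
apply: divr_ge0; last by lra.
apply: mulr_ge0; [apply: mulr_ge0|]; nra.
Qed.

Section V.
Variables (R : realType) (n : nat).
Local Notation vec := 'rV[R]_n.

Lemma dot_ge0 (u : vec) : 0 <= dot u u.
Proof. by apply: sumr_ge0 => i _; rewrite -expr2 sqr_ge0. Qed.
Lemma enorm_ge0 (u : vec) : 0 <= enorm u.
Proof. exact: sqrtr_ge0. Qed.
Lemma enorm_sq (u : vec) : enorm u ^+ 2 = dot u u.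
Proof. by rewrite /enorm sqr_sqrtr // dot_ge0. Qed.
Lemma dotZr (u h : vec) t : dot u (t *: h) = t * dot u h.
Proof. rewrite /dot mulr_sumr; apply: eq_bigr => i _; rewrite mxE; ring. Qed.
Lemma enormZ (h : vec) t : 0 <= t -> enorm (t *: h) = t * enorm h.
Proof.
move=> t0; rewrite /enorm.
have -> : dot (t *: h) (t *: h) = t ^+ 2 * dot h h.
  rewrite /dot mulr_sumr; apply: eq_bigr => i _; rewrite !mxE; ring.
by rewrite sqrtrM ?sqr_ge0 // sqrtr_sqr ger0_norm.
Qed.

Lemma comb_eq (w y : vec) t : t *: w + (1 - t) *: y = y + t *: (w - y).
Proof. by rewrite scalerBr scalerBl scale1r addrCA addrA. Qed.

Lemma grad_ineq (g : vec -> R) dg mu : 0 <= mu -> strongly_convex mu g ->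
  is_gradient g dg ->
  forall y w, g y + dot (dg y) (w - y) + mu / 2 * enorm (w - y) ^+ 2 <= g w.
Proof.
move=> m0 hsc hgr y w.
have N0 := enorm_ge0 (w - y).
set N := enorm (w - y) in N0 *.
suff : dot (dg y) (w - y) <= g w - g y - mu / 2 * N ^+ 2 by lra.
apply: (@le_eps _ _ _ (N + mu / 2 * N ^+ 2)) => e e0 e1.
have [d [d0 hd]] := hgr y e e0.
have den0 : 0 < d + e * N by nra.
pose t := e * d / (d + e * N).
have t0 : 0 < t by rewrite /t divr_gt0 // mulr_gt0.
have te : t <= e.
  by rewrite /t ler_pdivrMr // ; nra.
have tN : t * N < d.
  rewrite /t mulrAC ltr_pdivrMr //; nra.
have hc := hsc w y t.
rewrite comb_eq in hc.
have {hc} hc := hc (introT andP (conj (ltW t0) (le_trans te e1))).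
have hn : enorm (t *: (w - y)) = t * N by rewrite enormZ // ltW.
have := hd (t *: (w - y)); rewrite hn dotZr => /(_ tN) /ler_normlP [h1 h2].
rewrite -/N in hc.
have : t * dot (dg y) (w - y) <= t * (g w - g y - mu / 2 * (1 - t) * N ^+ 2 + e * N).
  by move: hc h1 h2; set T := g (y + t *: (w - y)); nra.
rewrite ler_pM2l // => h3.
have : mu / 2 * t * N ^+ 2 <= mu / 2 * e * N ^+ 2.
  apply: ler_wpM2r; first exact: sqr_ge0.
  by apply: ler_wpM2l => //; lra.
lra.
Qed.

Lemma amgm (v w : vec) a q : 0 < q ->
  - a * dot v w - q / 2 * enorm w ^+ 2 <= a ^+ 2 / (2 * q) * enorm v ^+ 2.
Proof.
move=> q0; rewrite !enorm_sq /dot !mulr_sumr -!sumrN -!big_split /=.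
apply: ler_sum => i _.
rewrite -subr_ge0.
have -> : a ^+ 2 / (2 * q) * (v ord0 i * v ord0 i) -
  (- a * (v ord0 i * w ord0 i) + - (q / 2 * (w ord0 i * w ord0 i))) =
  (a * v ord0 i + q * w ord0 i) ^+ 2 / (2 * q) by field; rewrite gt_eqF.
by rewrite divr_ge0 ?sqr_ge0 // ltW // mulr_gt0.
Qed.

Lemma vec_key (a et ga ga1 mu : R) (xs xk zk xp gr s v y zp : vec) :
 0 < a -> a <= 1 -> 0 < et -> 0 <= ga -> 0 <= mu ->
 ga1 = a^+2/et -> ga1 = (1-a)*ga + a*mu ->
 y = (a * ga + ga1)^-1 *: (a * ga *: zk + ga1 *: xk) ->
 zp = xk + a^-1 *: (xp - xk) ->
 v = gr + et^-1 *: (xp - y) + s ->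
 dot gr (xp-y) + 1/(2*et) * enorm (xp-y) ^+ 2 - a * dot s (xs-xp) - (1-a) * dot s (xk-xp)
   - a * dot gr (xs-y) - (1-a) * dot gr (xk-y) - a*mu/2 * enorm (xs-y) ^+ 2
 <= (1-a)*(ga/2) * enorm (xs-zk) ^+ 2 - ga1/2 * enorm (xs-zp) ^+ 2 - a * dot v (xs-zp).
Proof.
move=> a0 a1 e0 g0 m0 hg1 hg2 hy hzp hv.
rewrite !enorm_sq /dot !mulr_sumr -!sumrN -!big_split /=.
apply: ler_sum => i _; rewrite !mxE.
apply: scal_key => //.
- by rewrite hy !mxE.
- by rewrite hzp !mxE.
- by rewrite hv !mxE.
Qed.
End V.

Theorem theorem3p5 (R : realType) (n : nat)
  (g h r : 'rV[R]_n -> R) (D : 'rV[R]_n -> Prop)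
  (dg dh : 'rV[R]_n -> 'rV[R]_n)
  (mu Lg Lh gdec Lund : R) (xstar : 'rV[R]_n)
  (x z y : nat -> 'rV[R]_n) (eta alpha gamma eps : nat -> R) :
  (* g : convex, mu-strongly convex, differentiable, Lg-Lipschitz gradient *)
  0 <= mu -> strongly_convex mu g -> is_gradient g dg -> 0 < Lg -> lipschitz Lg dg ->
  (* h : convex, differentiable, Lh-Lipschitz gradient *)
  strongly_convex 0 h -> is_gradient h dh -> 0 <= Lh -> lipschitz Lh dh ->
  (* r : proper closed convex, r = +oo outside D *)
  proper_closed_convex D r ->
  (* F = g + h + r attains its minimum F* at xstar *)
  D xstar -> (forall u, D u -> g xstar + h xstar + r xstar <= g u + h u + r u) ->
  (* constants *)
  0 < gdec < 1 -> 0 < Lund -> mu <= Lund -> Lund <= Lg ->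
  (* iAPG iterates *)
  (forall k, 0 < eta k /\ 0 < alpha k /\ 0 < gamma k /\ 0 <= eps k) ->
  x 0%N = z 0%N -> D (x 0%N) -> mu <= gamma 0%N ->
  (forall k, gdec / Lg < eta k <= 1 / Lund) ->
  (forall k, gamma k.+1 = alpha k ^+ 2 / eta k /\
             alpha k ^+ 2 / eta k = (1 - alpha k) * gamma k + alpha k * mu) ->
  (forall k, y k = (alpha k * gamma k + gamma k.+1)^-1 *:
                   (alpha k * gamma k *: z k + gamma k.+1 *: x k)) ->
  (forall k, dist0_le
      (fun u => exists s, subdiff D (fun v => h v + r v) (x k.+1) s /\
                u = dg (y k) + (eta k)^-1 *: (x k.+1 - y k) + s) (eps k)) ->
  (forall k, g (x k.+1) <= g (y k) + dot (dg (y k)) (x k.+1 - y k)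
                          + 1 / (2 * eta k) * enorm (x k.+1 - y k) ^+ 2) ->
  (forall k, z k.+1 = x k + (alpha k)^-1 *: (x k.+1 - x k)) ->
  (* conclusions, for mu > 0 *)
  0 < mu ->
  let F := fun u => g u + h u + r u in
  let Fstar := F xstar in
  let kappa := Lg / (gdec * mu) in
  (forall c : R, 0 <= c < 1 ->
    let psi := fun k => F (x k) - Fstar
                 + (1 - (1 - c) * alpha k) * (gamma k / 2) * enorm (xstar - z k) ^+ 2 in
    forall k : nat,
      psi k.+1 <= (\prod_(j < k.+1) (1 - c * alpha j)) *
        (psi 0%N + Num.sqrt kappa / (2 * (1 - c) ^+ 2 * Lund) *
           \sum_(t < k.+1) (eps t ^+ 2 / \prod_(j < t) (1 - c * alpha j)))) /\
  ((forall k, eps k = 0) ->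
    forall k : nat,
      F (x k.+1) - Fstar + gamma k.+1 / 2 * enorm (xstar - z k.+1) ^+ 2 <=
        (1 - Num.sqrt (1 / kappa)) ^+ k.+1 *
        (F (x 0%N) - Fstar + gamma 0%N / 2 * enorm (xstar - z 0%N) ^+ 2)).

Proof.
move=> m0 hsc hgr Lg0 _ _ _ _ _ hpcc Dxs hmin hgd hL0 muL LL hpos hx0 Dx0 gam0
  hetab hgam hy hdist hdesc hz mu0 F Fstar kappa.
have [gd0 gd1] : 0 < gdec /\ gdec < 1 by move/andP: hgd.
have cvxD : convex_set D by case: hpcc => _ [[]].
have etaL : forall k, eta k * Lund <= 1.
  by move=> k; have /andP[_ hh] := hetab k; rewrite ler_pdivlMr // in hh.
have ha1 : forall k, alpha k <= 1.
  move=> k; have [e0 [a0 [g0 ep0]]] := hpos k; have [hg1 hg2] := hgam k.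
  have ha2 : alpha k ^+ 2 = eta k * ((1 - alpha k) * gamma k + alpha k * mu).
    by rewrite -hg2 mulrC mulfVK // gt_eqF.
  have hem : eta k * mu <= 1 by have := etaL k; nra.
  rewrite leNgt; apply/negP => hgt.
  have h1 : eta k * ((1 - alpha k) * gamma k) <= 0.
    by rewrite pmulr_rle0 // nmulr_rle0 //; lra.
  have h2 : eta k * (alpha k * mu) <= alpha k by nra.
  nra.
have hgm : forall k, mu <= gamma k.
  elim=> [//|k IH]; have [_ hg2] := hgam k; have [e0 [a0 [g0 ep0]]] := hpos k.
  have := ha1 k; rewrite (proj1 (hgam k)) hg2; nra.
have kap0 : 0 < kappa by rewrite /kappa divr_gt0 // mulr_gt0.
set sq := Num.sqrt (1 / kappa).
have hsa : forall k, sq < alpha k.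
  move=> k; have [e0 [a0 [g0 ep0]]] := hpos k; have [hg1 _] := hgam k.
  have ha2 : alpha k ^+ 2 = eta k * gamma k.+1 by rewrite hg1 mulrC mulfVK // gt_eqF.
  have hk : 1 / kappa = gdec / Lg * mu by rewrite /kappa; field; rewrite !gt_eqF.
  have : 1 / kappa < alpha k ^+ 2.
    rewrite hk ha2; have /andP[hh _] := hetab k.
    have := hgm k.+1; nra.
  rewrite -ltr_sqrt ?exprn_gt0 // sqrtr_sqr gtr0_norm //.
have sq0 : 0 < sq by rewrite sqrtr_gt0 divr_gt0.
have sq1 : sq < 1 by apply: lt_le_trans (hsa 0%N) (ha1 0%N).
have Dk : forall k, D (x k).
  case=> [//|k]; have [u [[s [[Dx1 _] _]] _]] := hdist k 1 ltr01; exact: Dx1.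
have aF : forall k, 0 <= F (x k) - Fstar.
  by move=> k; rewrite subr_ge0; apply: hmin.
have key : forall k d, 0 < d -> exists v, enorm v < eps k + d /\
   F (x k.+1) - Fstar <= (1 - alpha k) * (F (x k) - Fstar)
     + (1 - alpha k) * (gamma k / 2) * enorm (xstar - z k) ^+ 2
     - gamma k.+1 / 2 * enorm (xstar - z k.+1) ^+ 2
     - alpha k * dot (v) (xstar - z k.+1).
  move=> k d d0.
  have [u [[s [[Dx1 hsub] hu]] hnu]] := hdist k d d0.
  exists u; split => //.
  have [e0 [a0 [g0 ep0]]] := hpos k; have [hg1 hg2] := hgam k.
  have hs1 := hsub xstar Dxs; have hs2 := hsub (x k) (Dk k).
  have gr1 := @grad_ineq _ _ _ _ _ m0 hsc hgr (y k) xstar.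
  have gr2 := @grad_ineq _ _ _ _ _ m0 hsc hgr (y k) (x k).
  have hd := hdesc k.
  have hv := @vec_key _ _ _ _ _ _ _ xstar (x k) (z k) (x k.+1) (dg (y k)) s u (y k) (z k.+1)
    a0 (ha1 k) e0 (ltW g0) m0 hg1 (etrans hg1 hg2) (hy k) (hz k) hu.
  have a1' : 0 <= 1 - alpha k by have := ha1 k; lra.
  have := ler_wpM2l (ltW a0) hs1; have := ler_wpM2l a1' hs2.
  have := ler_wpM2l (ltW a0) gr1; have := ler_wpM2l a1' gr2.
  have : 0 <= (1 - alpha k) * (mu / 2 * enorm (x k - y k) ^+ 2).
    by rewrite mulr_ge0 // mulr_ge0 ?sqr_ge0 // divr_ge0.
  rewrite /Fstar /F; lra.
have step : forall k dl, 0 < dl -> dl <= 1 ->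
  F (x k.+1) - Fstar + (1 - dl) * (gamma k.+1 / 2 * enorm (xstar - z k.+1) ^+ 2)
  <= (1 - alpha k) * (F (x k) - Fstar + gamma k / 2 * enorm (xstar - z k) ^+ 2)
     + eta k / (2 * dl) * eps k ^+ 2.
  move=> k dl dl0 dl1.
  apply: (@le_eps _ _ _ (eta k / (2 * dl) * (2 * eps k + 1))) => e e0 e1.
  have [v [hv hk]] := key k e e0.
  have [e0' [a0 [g0 ep0]]] := hpos k; have [hg1 _] := hgam k.
  have g10 : 0 < gamma k.+1 by rewrite hg1 divr_gt0 ?exprn_gt0.
  have am := @amgm _ _ v (xstar - z k.+1) (alpha k) _ (mulr_gt0 dl0 g10).
  have hq : alpha k ^+ 2 / (2 * (dl * gamma k.+1)) = eta k / (2 * dl).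
    rewrite hg1; field; rewrite !gt_eqF //.
  rewrite hq in am.
  have nv : enorm v ^+ 2 <= eps k ^+ 2 + e * (2 * eps k + 1).
    have := @enorm_ge0 _ _ v; nra.
  have := ler_wpM2l (ltW (divr_gt0 e0' (mulr_gt0 (ltr0Sn _ 1%N) dl0))) nv.
  lra.
have bnn : forall k, 0 <= gamma k / 2 * enorm (xstar - z k) ^+ 2.
  move=> k; have [_ [_ [g0 _]]] := hpos k.
  by rewrite mulr_ge0 ?sqr_ge0 // divr_ge0 // ltW.
split; last first.
  move=> he0.
  have ph : forall k, F (x k.+1) - Fstar + gamma k.+1 / 2 * enorm (xstar - z k.+1) ^+ 2
     <= (1 - sq) * (F (x k) - Fstar + gamma k / 2 * enorm (xstar - z k) ^+ 2).
    move=> k.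
    have h1 : F (x k.+1) - Fstar + gamma k.+1 / 2 * enorm (xstar - z k.+1) ^+ 2 <=
       (1 - alpha k) * (F (x k) - Fstar + gamma k / 2 * enorm (xstar - z k) ^+ 2).
      apply: (@le_eps _ _ _ (gamma k.+1 / 2 * enorm (xstar - z k.+1) ^+ 2)) => e e0 e1.
      have := step k e e0 e1; rewrite he0 expr0n /= mulr0 addr0; lra.
    apply: (le_trans h1); apply: ler_wpM2r.
      by apply: addr_ge0; [exact: aF | exact: bnn].
    by have := hsa k; lra.
  have ind : forall k, F (x k) - Fstar + gamma k / 2 * enorm (xstar - z k) ^+ 2
     <= (1 - sq) ^+ k * (F (x 0%N) - Fstar + gamma 0%N / 2 * enorm (xstar - z 0%N) ^+ 2).
    elim=> [|k IH]; first by rewrite expr0 mul1r.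
    apply: (le_trans (ph k)).
    have h0 : 0 <= 1 - sq by lra.
    apply: (le_trans (ler_wpM2l h0 IH)).
    by rewrite [in X in _ <= X]exprS mulrA.
  by move=> k; exact: ind.
move=> c /andP[c0 c1] psi.
set K := Num.sqrt kappa.
set C := K / (2 * (1 - c) ^+ 2 * Lund).
have sK : sq * K = 1.
  rewrite /K /sq -sqrtrM; last by rewrite divr_ge0 // ltW.
  by rewrite mul1r mulVf ?sqrtr1 // gt_eqF.
have hK : K = sq^-1.
  by rewrite -[K]mul1r -(mulVf (lt0r_neq0 sq0)) -mulrA sK mulr1.
have one : forall k, psi k.+1 <= (1 - c * alpha k) * (psi k + C * eps k ^+ 2).
  move=> k.
  have [e0 [a0 [g0 ep0]]] := hpos k.
  have ak1 := ha1 k.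
  have dl0 : 0 < (1 - c) * sq by rewrite mulr_gt0 // subr_gt0.
  have dl1 : (1 - c) * sq <= 1 by nra.
  have st := step k _ dl0 dl1.
  have hb1 := bnn k.+1; have hb0 := bnn k; have ha := aF k; have ha' := aF k.+1.
  have hs1 := hsa k.+1.
  have p1 : 0 <= ((1 - c) * alpha k.+1 - (1 - c) * sq) *
              (gamma k.+1 / 2 * enorm (xstar - z k.+1) ^+ 2).
    by apply: mulr_ge0 => //; nra.
  have p2 : 0 <= (1 - c) * alpha k * (F (x k) - Fstar).
    by apply: mulr_ge0 => //; nra.
  have p3 : 0 <= c * (1 - c) * alpha k ^+ 2 * (gamma k / 2 * enorm (xstar - z k) ^+ 2).
    by apply: mulr_ge0 => //; apply: mulr_ge0; [nra| exact: sqr_ge0].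
  have p4 : eta k / (2 * ((1 - c) * sq)) * eps k ^+ 2 <= (1 - c * alpha k) * C * eps k ^+ 2.
    apply: ler_wpM2r; first exact: sqr_ge0.
    pose W := (2 * (1 - c) ^+ 2 * Lund * sq)^-1.
    have c' : 0 < 1 - c by lra.
    have W0 : 0 < W.
      rewrite invr_gt0; apply: mulr_gt0 => //; apply: mulr_gt0 => //.
      by apply: mulr_gt0 => //; exact: exprn_gt0.
    have -> : eta k / (2 * ((1 - c) * sq)) = eta k * Lund * (1 - c) * W.
      by rewrite /W; field; rewrite !gt_eqF // ?subr_gt0 //.
    have -> : (1 - c * alpha k) * C = (1 - c * alpha k) * W.
      by rewrite /C /W hK; field; rewrite !gt_eqF // ?subr_gt0 //.
    apply: ler_wpM2r; first exact: ltW.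
    have := etaL k; nra.
  rewrite /psi; lra.
have cpos : forall j, 0 < 1 - c * alpha j.
  move=> j; have := ha1 j; have [_ [a0 _]] := hpos j; nra.
have Ppos : forall k, 0 < \prod_(j < k) (1 - c * alpha j).
  by move=> k; apply: prodr_gt0 => j _; exact: cpos.
have ind : forall k, psi k <= \prod_(j < k) (1 - c * alpha j) *
    (psi 0%N + C * \sum_(t < k) (eps t ^+ 2 / \prod_(j < t) (1 - c * alpha j))).
  elim=> [|k IH]; first by rewrite !big_ord0 mul1r mulr0 addr0.
  rewrite !big_ord_recr /=.
  apply: (le_trans (one k)).
  have h1 : psi k + C * eps k ^+ 2 <= \prod_(j < k) (1 - c * alpha j) *
    (psi 0%N + C * \sum_(t < k) (eps t ^+ 2 / \prod_(j < t) (1 - c * alpha j)))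
     + C * eps k ^+ 2 by lra.
  apply: (le_trans (ler_wpM2l (ltW (cpos k)) h1)).
  rewrite le_eqVlt; apply/orP; left; apply/eqP.
  by field; rewrite gt_eqF.
by move=> k; exact: ind k.+1.
Qed.
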